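(* Let $f:\subseteq X\to\mathbb{N}$ and $f_{\mathbb S}:\subseteq X\to\mathbb{S}$ be single-valued problems that are not constant on their domains. Then (1) $f'$ is co-complete and co-total; (2) $f_{\mathbb S}'$ is co-complete.
   Context: Represented space $(X,\delta_X)$: set with surjective partial $\delta_X:\subseteq\mathbb{N}^\mathbb{N}\to X$. $\mathbb{N}$ is represented by $p\mapsto p(0)$; Sierpiński space $\mathbb{S}=\{0,1\}$ is represented by $\delta_{\mathbb S}(p)=0\iff p=000\dots$. A problem $f:\subseteq X\rightrightarrows Y$ is a partial multi-valued map with nonempty values on its domain; $F\vdash f$ means $\delta_YF(p)\in f(\delta_X(p))$ whenever $\delta_X(p)\in\mathrm{dom}(f)$. $f\le_W g$ iff there are computable partial $H,K:\subseteq\mathbb{N}^\mathbb{N}\to\mathbb{N}^\mathbb{N}$ with $H\langle\mathrm{id},GK\rangle\vdash f$ for all $G\vdash g$ (where $\langle p,q\rangle(2n)=p(n),\langle p,q\rangle(2n+1)=q(n)$). $\lim:\subseteq\mathbb{N}^\mathbb{N}\to\mathbb{N}^\mathbb{N}$ maps $\langle p_0,p_1,\dots\rangle$ to $\lim_n p_n$; the jump $f'$ of $f:\subseteq X\rightrightarrows Y$ is the same map with input representation $\delta_X\circ\lim$. For $p\in\mathbb{N}^\mathbb{N}$, $p-1$ is the concatenation of $p(0)-1,p(1)-1,\dots$ with $0-1$ the empty word; the completion of $(X,\delta_X)$ is $\overline X=X\cup\{\bot\}$ with $\delta_{\overline X}(p)=\delta_X(p-1)$ if $p-1$ is an infinite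 sequence in $\mathrm{dom}(\delta_X)$ and $\bot$ otherwise. For $g:\subseteq U\rightrightarrows V$: $\overline g:\overline U\rightrightarrows\overline V$ equals $g$ on $\mathrm{dom}(g)$ and $\overline V$ elsewhere; $\mathsf Tg:U\rightrightarrows V$ equals $g$ on $\mathrm{dom}(g)$ and $V$ elsewhere. A problem $h$ is co-complete if for all problems $g$: $h\le_W\overline g\iff h\le_W g$; it is co-total if for all problems $g$: $h\le_W\mathsf Tg\iff h\le_W g$. *)

(* Defs.v *)
From Stdlib Require Import Arith Lia List Cantor FunctionalExtensionality.
Import ListNotations.

Definition B := nat -> nat.

Inductive rf : Type :=
| rZ : rf
| rS : rf
| rP : nat -> rf
| rC : rf -> list rf -> rf
| rR : rf -> rf -> rf
| rM : rf -> rf.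

Inductive reval : rf -> list nat -> nat -> Prop :=
| ev_Z xs : reval rZ xs 0
| ev_S xs : reval rS xs (S (hd 0 xs))
| ev_P i xs : reval (rP i) xs (nth i xs 0)
| ev_C f gs xs ys z : revals gs xs ys -> reval f ys z -> reval (rC f gs) xs z
| ev_R0 f g xs z : reval f xs z -> reval (rR f g) (0 :: xs) z
| ev_RS f g n xs r z :
    reval (rR f g) (n :: xs) r -> reval g (n :: r :: xs) z ->
    reval (rR f g) (S n :: xs) z
| ev_M f xs y :
    reval f (y :: xs) 0 ->
    (forall z, z < y -> exists w, reval f (z :: xs) (S w)) ->
    reval (rM f) xs y
with revals : list rf -> list nat -> list nat -> Prop :=
| evs_nil xs : revals [] xs []
| evs_cons g gs xs y ys : reval g xs y -> revals gs xs ys -> revals (g :: gs) xs (y :: ys).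

Definition computable_nat (a : nat -> nat) : Prop :=
  exists c : rf, forall n, reval c [n] (a n).

Fixpoint code (l : list nat) : nat :=
  match l with
  | [] => 0
  | x :: l' => S (Cantor.to_nat (x, code l'))
  end.

Definition prefix (p : B) (k : nat) : list nat := map p (seq 0 k).

(** The partial function B -> B (as a functional relation) induced by an
    associate a : nat -> nat:  F(p)(n) = a<n, p[k]> - 1 for the least k with
    a<n, p[k]> > 0.  A partial function on Baire space is computable iff it
    has a computable extension of this form. *)
Definition assoc_fun (a : nat -> nat) (p q : B) : Prop :=
  forall n, exists k,
    a (Cantor.to_nat (n, code (prefix p k))) = S (q n) /\
    (forall j, j < k -> a (Cantor.to_nat (n, code (prefix p j))) = 0).

Definition computable_partial (H : B -> B -> Prop) : Prop :=
  exists a, computable_nat a /\ H = assoc_fun a.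

Definition bjoin (p q : B) : B :=
  fun n => if Nat.even n then p (Nat.div2 n) else q (Nat.div2 n).

Definition partial_fun (G : B -> B -> Prop) : Prop :=
  forall p q1 q2, G p q1 -> G p q2 -> q1 = q2.

Record rep : Type := Rep {
  carrier :> Type;
  delta : B -> carrier -> Prop;
  delta_fun : forall p x y, delta p x -> delta p y -> x = y;
  delta_surj : forall x, exists p, delta p x
}.

Definition problem (X Y : rep) : Type := X -> Y -> Prop.

Definition dom {X Y : rep} (f : problem X Y) (x : X) : Prop := exists y, f x y.

Definition realizes {X Y : rep} (F : B -> B -> Prop) (f : problem X Y) : Prop :=
  forall p x, delta X p x -> dom f x ->
    exists q y, F p q /\ delta Y q y /\ f x y.

Definition weihrauch {X Y U V : rep} (f : problem X Y) (g : problem U V) : Prop :=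
  exists H K, computable_partial H /\ computable_partial K /\
    forall G, partial_fun G -> realizes G g ->
      realizes (fun p r => exists q s, K p q /\ G q s /\ H (bjoin p s) r) f.

Definition Nat_rep : rep.
Proof.
  refine (@Rep nat (fun p n => p 0 = n) _ _).
  - intros p x y -> ->; reflexivity.
  - intros x; exists (fun _ => x); reflexivity.
Defined.

(** Sierpinski space: false = 0 (represented by 000...), true = 1 *)
Definition Sier_rep : rep.
Proof.
  refine (@Rep bool (fun p b => b = false <-> forall n, p n = 0) _ _).
  - intros p [] [] Hx Hy; try reflexivity.
    + apply Hx, Hy; reflexivity.
    + symmetry; apply Hy, Hx; reflexivity.
  - intros [].
    + exists (fun _ => 1); split; [discriminate | intros H; specialize (H 0); discriminate].
    + exists (fun _ => 0); split; auto.
Defined.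

Definition limrel (p q : B) : Prop :=
  forall j, exists N, forall n, N <= n -> p (Cantor.to_nat (n, j)) = q j.

Lemma limrel_fun p q1 q2 : limrel p q1 -> limrel p q2 -> q1 = q2.
Proof.
  intros H1 H2; apply functional_extensionality; intros j.
  destruct (H1 j) as [N1 E1]; destruct (H2 j) as [N2 E2].
  rewrite <- (E1 (N1 + N2)) by lia; apply E2; lia.
Qed.

Definition jump_rep (X : rep) : rep.
Proof.
  refine (@Rep (carrier X) (fun p x => exists q, limrel p q /\ delta X q x) _ _).
  - intros p x y [q1 [L1 D1]] [q2 [L2 D2]].
    pose proof (limrel_fun _ _ _ L1 L2); subst; eapply delta_fun; eauto.
  - intros x; destruct (delta_surj X x) as [q Hq].
    exists (fun m => q (snd (Cantor.of_nat m))); exists q; split; auto.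
    intros j; exists 0; intros n _; rewrite Cantor.cancel_of_to; reflexivity.
Defined.

(** the jump f' : same map, input representation delta_X ∘ lim *)
Definition jump {X Y : rep} (f : problem X Y) : problem (jump_rep X) Y := f.

Fixpoint cnt (p : B) (m : nat) : nat :=
  match m with
  | 0 => 0
  | S m' => cnt p m' + (if Nat.eqb (p m') 0 then 0 else 1)
  end.

(** minus1 p q : p - 1 is the infinite sequence q *)
Definition minus1 (p q : B) : Prop :=
  forall i, exists m, 0 < p m /\ cnt p m = i /\ q i = p m - 1.

Lemma cnt_mono p m1 m2 : m1 <= m2 -> cnt p m1 <= cnt p m2.
Proof. induction 1; simpl; lia. Qed.

Lemma cnt_pos p m : 0 < p m -> cnt p (S m) = S (cnt p m).
Proof. intros H; simpl; destruct (Nat.eqb_spec (p m) 0); lia. Qed.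

Lemma minus1_fun p q1 q2 : minus1 p q1 -> minus1 p q2 -> q1 = q2.
Proof.
  intros H1 H2; apply functional_extensionality; intros i.
  destruct (H1 i) as [m1 [P1 [C1 E1]]]; destruct (H2 i) as [m2 [P2 [C2 E2]]].
  assert (m1 = m2).
  { destruct (Nat.lt_trichotomy m1 m2) as [h|[h|h]]; auto.
    - pose proof (cnt_mono p (S m1) m2 h); rewrite cnt_pos in * by auto; lia.
    - pose proof (cnt_mono p (S m2) m1 h); rewrite cnt_pos in * by auto; lia. }
  subst; congruence.
Qed.

(** None plays the role of ⊥ *)
Definition cdelta (X : rep) (p : B) (o : option X) : Prop :=
  match o with
  | Some x => exists q, minus1 p q /\ delta X q x
  | None => ~ (exists q x, minus1 p q /\ delta X q x)
  end.

Definition completion (X : rep) : rep.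
Proof.
  refine (@Rep (option (carrier X)) (cdelta X) _ _).
  - intros p [x|] [y|]; simpl.
    + intros [q1 [M1 D1]] [q2 [M2 D2]].
      pose proof (minus1_fun _ _ _ M1 M2); subst; f_equal; eapply delta_fun; eauto.
    + intros [q [M D]] N; exfalso; apply N; eauto.
    + intros N [q [M D]]; exfalso; apply N; eauto.
    + reflexivity.
  - intros [x|]; simpl.
    + destruct (delta_surj X x) as [q Hq].
      exists (fun i => S (q i)); exists q; split; auto.
      intros i; exists i; split; [lia|split; [|lia]].
      induction i; simpl; auto. rewrite IHi; simpl; lia.
    + exists (fun _ => 0); intros [q [x [M _]]].
      destruct (M 0) as [m [h _]]; lia.
Defined.

Definition pcompletion {U V : rep} (g : problem U V)
  : problem (completion U) (completion V) :=
  fun u v => forall u', u = Some u' -> dom g u' ->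
               exists v', v = Some v' /\ g u' v'.

Definition totalization {U V : rep} (g : problem U V) : problem U V :=
  fun u v => dom g u -> g u v.

Definition co_complete {X Y : rep} (h : problem X Y) : Prop :=
  forall (U V : rep) (g : problem U V),
    weihrauch h (pcompletion g) <-> weihrauch h g.

Definition co_total {X Y : rep} (h : problem X Y) : Prop :=
  forall (U V : rep) (g : problem U V),
    weihrauch h (totalization g) <-> weihrauch h g.

Definition single_valued {X Y : rep} (f : problem X Y) : Prop :=
  forall x y1 y2, f x y1 -> f x y2 -> y1 = y2.

Definition nonconstant {X Y : rep} (f : problem X Y) : Prop :=
  exists x1 x2 y1 y2, f x1 y1 /\ f x2 y2 /\ y1 <> y2.

(* Main.v *)
Require Import Defs.
From Stdlib Require Import Arith Lia List Cantor FunctionalExtensionality Classical ClassicalEpsilon.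
Import ListNotations.


Inductive exp : Type :=
| Var (j : nat)
| Zero
| Succ (e : exp)
| Fn (a : nat -> nat) (Ha : computable_nat a) (e : exp)
| Rec (B z s : exp).

Fixpoint eval (e : exp) (env : list nat) : nat :=
  match e with
  | Var j => nth j env 0
  | Zero => 0
  | Succ e => S (eval e env)
  | Fn a _ e => a (eval e env)
  | Rec B z s => nat_rec (fun _ => nat) (eval z env)
                   (fun i r => eval s (i :: r :: env)) (eval B env)
  end.

Lemma revals_proj xs : forall s n, revals (map rP (seq s n)) xs (map (fun j => nth j xs 0) (seq s n)).
Proof.
  intros s n; revert s; induction n; intros s; simpl; constructor; auto; constructor.
Qed.

Lemma map_nth_self (xs : list nat) : map (fun j => nth j xs 0) (seq 0 (length xs)) = xs.
Proof.
  induction xs; simpl; auto. f_equal. rewrite <- seq_shift, map_map. simpl. auto.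
Qed.

Lemma exp_comp : forall e k, exists c, forall xs, length xs = k -> reval c xs (eval e xs).
Proof.
  induction e; intros k.
  - exists (rP j); intros; constructor.
  - exists rZ; intros; constructor.
  - destruct (IHe k) as [c Hc]. exists (rC rS [c]); intros xs Hl.
    econstructor. constructor. apply Hc; auto. constructor. constructor.
  - destruct (IHe k) as [c Hc]. destruct Ha as [ca Hca].
    exists (rC ca [c]); intros xs Hl. simpl.
    econstructor. constructor. apply Hc; auto. constructor. apply Hca.
  - destruct (IHe1 k) as [cB HB]. destruct (IHe2 k) as [cz Hz]. destruct (IHe3 (S (S k))) as [cs Hs].
    exists (rC (rR cz cs) (cB :: map rP (seq 0 k))). intros xs Hl.
    econstructor. constructor. apply HB; auto. apply revals_proj.
    subst k. rewrite map_nth_self. simpl.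
    induction (eval e1 xs); simpl.
    + constructor. apply Hz; auto.
    + econstructor. apply IHn. apply Hs. simpl. lia.
Qed.

Lemma exp_computable (e : exp) : computable_nat (fun m => eval e [m]).
Proof.
  destruct (exp_comp e 1) as [c Hc]. exists c. intros n. apply Hc. reflexivity.
Qed.

Fixpoint lift (c d : nat) (e : exp) : exp :=
  match e with
  | Var j => Var (if j <? c then j else j + d)
  | Zero => Zero
  | Succ e => Succ (lift c d e)
  | Fn a H e => Fn a H (lift c d e)
  | Rec B z s => Rec (lift c d B) (lift c d z) (lift (S (S c)) d s)
  end.

Lemma eval_lift : forall e c d env1 ins env2, length env1 = c -> length ins = d ->
  eval (lift c d e) (env1 ++ ins ++ env2) = eval e (env1 ++ env2).
Proof.
  induction e; intros c d env1 ins env2 H1 H2; simpl.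
  - destruct (j <? c) eqn:E.
    + apply Nat.ltb_lt in E. rewrite !app_nth1 by lia. auto.
    + apply Nat.ltb_ge in E. rewrite (app_nth2 env1) by lia. rewrite (app_nth2 env1) by lia. rewrite (app_nth2 ins) by lia. f_equal. lia.
  - auto.
  - rewrite IHe; auto.
  - rewrite IHe; auto.
  - rewrite IHe1, IHe2; auto.
    induction (eval e1 (env1 ++ env2)); simpl; auto.
    rewrite IHn.
    change (n :: nat_rec (fun _ : nat => nat) (eval e2 (env1 ++ env2))
              (fun (i r : nat) => eval e3 (i :: r :: env1 ++ env2)) n :: env1 ++ ins ++ env2)
      with ((n :: nat_rec (fun _ : nat => nat) (eval e2 (env1 ++ env2))
              (fun (i r : nat) => eval e3 (i :: r :: env1 ++ env2)) n :: env1) ++ ins ++ env2).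
    rewrite IHe3; simpl; auto.
Qed.

Lemma eval_lift0 e d ins env : length ins = d -> eval (lift 0 d e) (ins ++ env) = eval e env.
Proof. intros H. apply (eval_lift e 0 d [] ins env); auto. Qed.

Lemma eval_lift1 e x ins env : eval (lift 1 (length ins) e) (x :: ins ++ env) = eval e (x :: env).
Proof. apply (eval_lift e 1 (length ins) [x] ins env); auto. Qed.


Definition ifz (c a b : nat) : nat := match c with 0 => a | _ => b end.
Definition firstnz (E : nat -> nat) (B : nat) : nat :=
  nat_rec (fun _ => nat) 0 (fun i r => ifz r (E i) r) B.
Definition count (E : nat -> nat) (B : nat) : nat :=
  nat_rec (fun _ => nat) 0 (fun i r => r + ifz (E i) 0 1) B.
Definition T (s : nat) : nat := nat_rec (fun _ => nat) 0 (fun i m => S i + m) s.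
Definition cbuild (F : nat -> nat) (L : nat) : nat :=
  nat_rec (fun _ => nat) 0 (fun i r => S (Cantor.to_nat (F (L - S i), r))) L.

Fixpoint EConst (n : nat) : exp := match n with 0 => Zero | S n => Succ (EConst n) end.
Definition EPred e := Rec e Zero (Var 0).
Definition EAdd e1 e2 := Rec e1 e2 (Succ (Var 1)).
Definition ESub e1 e2 := Rec e2 e1 (EPred (Var 1)).
Definition EIfz c a b := Rec c a (lift 0 2 b).
Definition ELet e1 e2 := Rec (Succ Zero) e1 (lift 0 1 e2).
Definition EFirst B E := Rec B Zero (EIfz (Var 1) (lift 1 1 E) (Var 1)).
Definition ECount B E := Rec B Zero (EAdd (Var 1) (EIfz (lift 1 1 E) Zero (Succ Zero))).
Definition ET e := Rec e Zero (EAdd (Succ (Var 0)) (Var 1)).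
Definition EToNat x y := EAdd y (ET (EAdd y x)).
Definition EBuild B F := ELet B (Rec (Var 0) Zero
   (Succ (EToNat (ELet (ESub (Var 2) (Succ (Var 0))) (lift 1 3 F)) (Var 1)))).

Lemma eval_EConst n env : eval (EConst n) env = n.
Proof. induction n; simpl; auto. Qed.
Lemma eval_EPred e env : eval (EPred e) env = pred (eval e env).
Proof. simpl. destruct (eval e env); auto. Qed.
Lemma eval_EAdd e1 e2 env : eval (EAdd e1 e2) env = eval e1 env + eval e2 env.
Proof. simpl. induction (eval e1 env); simpl; auto. Qed.
Lemma eval_ESub e1 e2 env : eval (ESub e1 e2) env = eval e1 env - eval e2 env.
Proof. unfold ESub. simpl. induction (eval e2 env); simpl. lia. rewrite IHn. destruct (eval e1 env - n) eqn:E; simpl; lia. Qed.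
Lemma eval_EIfz c a b env : eval (EIfz c a b) env = ifz (eval c env) (eval a env) (eval b env).
Proof. simpl. destruct (eval c env); simpl; auto. apply (eval_lift0 b 2 [n; _] env); auto. Qed.
Lemma eval_ELet e1 e2 env f : (forall x, eval e2 (x :: env) = f x) -> eval (ELet e1 e2) env = f (eval e1 env).
Proof. intros H. simpl. rewrite <- H. apply (eval_lift0 e2 1 [0] _); auto. Qed.
Lemma eval_EFirst B E env f : (forall i, eval E (i :: env) = f i) -> eval (EFirst B E) env = firstnz f (eval B env).
Proof.
  intros H. unfold EFirst, firstnz. cbn -[EIfz lift]. induction (eval B env); cbn -[EIfz lift]; auto.
  rewrite IHn. rewrite eval_EIfz. cbn -[lift]. f_equal.
  rewrite <- H. apply (eval_lift1 E n [_] env).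
Qed.
Lemma eval_ECount B E env f : (forall i, eval E (i :: env) = f i) -> eval (ECount B E) env = count f (eval B env).
Proof.
  intros H. unfold ECount, count. cbn -[EIfz EAdd lift]. induction (eval B env); cbn -[EIfz EAdd lift]; auto.
  rewrite IHn. rewrite eval_EAdd, eval_EIfz. cbn -[lift]. f_equal. f_equal.
  rewrite <- H. apply (eval_lift1 E n [_] env).
Qed.
Lemma eval_ET e env : eval (ET e) env = T (eval e env).
Proof. unfold ET, T. cbn -[EAdd]. induction (eval e env); cbn -[EAdd]; auto. rewrite IHn. rewrite eval_EAdd. simpl. auto. Qed.
Lemma eval_EToNat x y env : eval (EToNat x y) env = Cantor.to_nat (eval x env, eval y env).
Proof. unfold EToNat. rewrite eval_EAdd, eval_ET, eval_EAdd. reflexivity. Qed.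
Lemma eval_EBuild B F env f : (forall j, eval F (j :: env) = f j) -> eval (EBuild B F) env = cbuild f (eval B env).
Proof.
  intros H. unfold EBuild. erewrite eval_ELet. reflexivity.
  intros L. cbn -[EToNat ELet ESub lift]. unfold cbuild.
  generalize L at 2 4. intros n. induction n. reflexivity. cbn -[eval to_nat].
  rewrite IHn. f_equal. rewrite eval_EToNat. f_equal. f_equal.
  erewrite eval_ELet. rewrite eval_ESub. reflexivity. intros x. cbn -[lift].
  rewrite <- H. apply (eval_lift1 F x [_;_;_] env).
Qed.

Lemma eval_L1 e x env : eval (lift 0 1 e) (x :: env) = eval e env.
Proof. apply (eval_lift0 e 1 [x] env); auto. Qed.

Definition dd (m : nat) := count (fun j => ifz (T (S j) - m) 1 0) m.
Definition u2 m := m - T (dd m).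
Definition u1 m := dd m - u2 m.

Lemma T_S j : T (S j) = S j + T j.
Proof. reflexivity. Qed.
Lemma T_mono a b : a <= b -> T a <= T b.
Proof. induction 1; auto. rewrite T_S. lia. Qed.
Lemma T_ge n : n <= T n.
Proof. induction n; auto. rewrite T_S. lia. Qed.

Lemma count_min E n : (forall i, E i <> 0 <-> i < n) -> forall B, count E B = min B n.
Proof.
  intros H B. induction B. reflexivity.
  unfold count in *. cbn -[Nat.min]. rewrite IHB. unfold ifz.
  destruct (E B) eqn:EB.
  - assert (~ B < n) by (intro h; apply H in h; auto). lia.
  - assert (B < n) by (apply H; lia). lia.
Qed.

Lemma of_nat_eq m : Cantor.of_nat m = (u1 m, u2 m).
Proof.
  destruct (Cantor.of_nat m) as [x y] eqn:E.
  pose proof (Cantor.cancel_to_of m) as C. rewrite E in C. simpl in C.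
  change (y + T (y + x) = m) in C.
  assert (Hd : dd m = y + x).
  { unfold dd. rewrite (count_min _ (y + x)).
    - assert (y + x <= m) by (pose proof (T_ge (y+x)); lia). lia.
    - intros i. split.
      + intros h. unfold ifz in h. destruct (T (S i) - m) eqn:E2; [|lia].
        destruct (le_lt_dec (S i) (y + x)); auto.
        pose proof (T_mono (S (y+x)) (S i) ltac:(lia)). rewrite (T_S (y+x)) in H. lia.
      + intros h. pose proof (T_mono (S i) (y + x) ltac:(lia)).
        assert (T (S i) - m = 0) by lia. rewrite H0. simpl. lia. }
  unfold u1, u2. rewrite Hd. f_equal; lia.
Qed.

Definition chd c := u1 (pred c).
Definition ctl c := u2 (pred c).
Definition itl c i := nat_rec (fun _ => nat) c (fun _ r => ctl r) i.
Definition clen c := count (fun i => itl c i) c.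
Definition cnth c i := chd (itl c i).

Lemma chd_code x l : chd (code (x :: l)) = x.
Proof. unfold chd. change (code (x :: l)) with (S (to_nat (x, code l))). cbn [pred]. pose proof (of_nat_eq (to_nat (x, code l))). rewrite cancel_of_to in H. congruence. Qed.
Lemma ctl_code x l : ctl (code (x :: l)) = code l.
Proof. unfold ctl. change (code (x :: l)) with (S (to_nat (x, code l))). cbn [pred]. pose proof (of_nat_eq (to_nat (x, code l))). rewrite cancel_of_to in H. congruence. Qed.
Lemma u_0 : u1 0 = 0 /\ u2 0 = 0.
Proof. pose proof (of_nat_eq 0). simpl in H. inversion H. auto. Qed.
Lemma chd_0 : chd 0 = 0.
Proof. apply u_0. Qed.
Lemma ctl_0 : ctl 0 = 0.
Proof. apply u_0. Qed.

Lemma itl_S c i : itl c (S i) = ctl (itl c i).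
Proof. reflexivity. Qed.
Lemma itl_code l i : itl (code l) i = code (skipn i l).
Proof.
  induction i. reflexivity. rewrite itl_S, IHi.
  clear IHi. revert l. induction i; intros l.
  - destruct l; simpl. apply ctl_0. apply ctl_code.
  - destruct l; simpl. apply ctl_0. apply IHi.
Qed.

Lemma code_len l : length l <= code l.
Proof. induction l; simpl; auto. pose proof (to_nat_non_decreasing a (code l)). lia. Qed.

Lemma code_0 l : code l = 0 <-> l = [].
Proof. destruct l; simpl; split; congruence. Qed.

Lemma clen_code l : clen (code l) = length l.
Proof.
  unfold clen. rewrite (count_min _ (length l)).
  - pose proof (code_len l). lia.
  - intros i. rewrite itl_code. rewrite code_0. split.
    + intros h. destruct (le_lt_dec (length l) i); auto. exfalso. apply h. apply skipn_all2. auto.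
    + intros h e. apply (f_equal (@length nat)) in e. rewrite length_skipn in e. simpl in e. lia.
Qed.

Lemma cnth_code l i : cnth (code l) i = nth i l 0.
Proof.
  unfold cnth. rewrite itl_code. revert i; induction l; intros i.
  - rewrite skipn_nil. destruct i; apply chd_0.
  - destruct i; simpl. apply chd_code. apply IHl.
Qed.

Lemma cbuild_code F L : cbuild F L = code (map F (seq 0 L)).
Proof.
  unfold cbuild.
  assert (forall n, n <= L -> nat_rec (fun _ => nat) 0 (fun i r => S (to_nat (F (L - S i), r))) n
                       = code (map F (seq (L - n) n))).
  { induction n; intros h. reflexivity.
    replace (nat_rec (fun _ => nat) 0 (fun i r => S (to_nat (F (L - S i), r))) (S n)) with (S (to_nat (F (L - S n), nat_rec (fun _ => nat) 0 (fun i r => S (to_nat (F (L - S i), r))) n))) by reflexivity.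
    rewrite IHn by lia.
    replace (L - n) with (S (L - S n)) by lia. simpl. reflexivity. }
  rewrite H by lia. rewrite Nat.sub_diag. reflexivity.
Qed.

Definition EDd m := ECount m (EIfz (ESub (ET (Succ (Var 0))) (lift 0 1 m)) (EConst 1) Zero).
Definition EU2 m := ESub m (ET (EDd m)).
Definition EU1 m := ESub (EDd m) (EU2 m).
Definition EChd c := EU1 (EPred c).
Definition ECtl c := EU2 (EPred c).
Definition EItl c i := Rec i c (ECtl (Var 1)).
Definition EClen c := ECount c (EItl (lift 0 1 c) (Var 0)).
Definition ENth c i := EChd (EItl c i).

Lemma eval_EDd m env : eval (EDd m) env = dd (eval m env).
Proof.
  unfold EDd, dd. erewrite eval_ECount. reflexivity. intros j.
  rewrite eval_EIfz, eval_ESub, eval_ET, eval_L1. reflexivity.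
Qed.
Lemma eval_EU2 m env : eval (EU2 m) env = u2 (eval m env).
Proof. unfold EU2. rewrite eval_ESub, eval_ET, eval_EDd. reflexivity. Qed.
Lemma eval_EU1 m env : eval (EU1 m) env = u1 (eval m env).
Proof. unfold EU1. rewrite eval_ESub, eval_EU2, eval_EDd. reflexivity. Qed.
Lemma eval_EChd c env : eval (EChd c) env = chd (eval c env).
Proof. unfold EChd. rewrite eval_EU1, eval_EPred. reflexivity. Qed.
Lemma eval_ECtl c env : eval (ECtl c) env = ctl (eval c env).
Proof. unfold ECtl. rewrite eval_EU2, eval_EPred. reflexivity. Qed.
Lemma eval_EItl c i env : eval (EItl c i) env = itl (eval c env) (eval i env).
Proof.
  unfold EItl, itl. cbn -[ECtl]. induction (eval i env). reflexivity.
  cbn -[ECtl eval]. rewrite <- IHn. rewrite eval_ECtl. reflexivity.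
Qed.
Lemma eval_EClen c env : eval (EClen c) env = clen (eval c env).
Proof.
  unfold EClen, clen. erewrite eval_ECount. reflexivity. intros i.
  rewrite eval_EItl, eval_L1. reflexivity.
Qed.
Lemma eval_ENth c i env : eval (ENth c i) env = cnth (eval c env) (eval i env).
Proof. unfold ENth. rewrite eval_EChd, eval_EItl. reflexivity. Qed.


Lemma u1_to x y : u1 (to_nat (x, y)) = x.
Proof. pose proof (of_nat_eq (to_nat (x, y))). rewrite cancel_of_to in H. congruence. Qed.
Lemma u2_to x y : u2 (to_nat (x, y)) = y.
Proof. pose proof (of_nat_eq (to_nat (x, y))). rewrite cancel_of_to in H. congruence. Qed.

Lemma firstnz_S E B : firstnz E (S B) = ifz (firstnz E B) (E B) (firstnz E B).
Proof. reflexivity. Qed.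
Lemma count_S E B : count E (S B) = count E B + ifz (E B) 0 1.
Proof. reflexivity. Qed.

Lemma firstnz_first E i0 B : E i0 <> 0 -> (forall j, j < i0 -> E j = 0) ->
  firstnz E B = if i0 <? B then E i0 else 0.
Proof.
  intros H0 H1. induction B. reflexivity.
  rewrite firstnz_S, IHB.
  destruct (Nat.ltb_spec i0 B); destruct (Nat.ltb_spec i0 (S B)); try lia.
  - unfold ifz. destruct (E i0); [congruence|auto].
  - assert (i0 = B) by lia. subst. reflexivity.
  - simpl. apply H1. lia.
Qed.

Lemma firstnz_zero E B : (forall j, j < B -> E j = 0) -> firstnz E B = 0.
Proof. intros H. induction B. reflexivity. rewrite firstnz_S, IHB by auto. simpl. auto. Qed.

Lemma firstnz_spec E B : (firstnz E B = 0 /\ forall j, j < B -> E j = 0) \/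
  (exists i, i < B /\ E i <> 0 /\ (forall j, j < i -> E j = 0) /\ firstnz E B = E i).
Proof.
  induction B.
  - left. split. reflexivity. intros; lia.
  - rewrite firstnz_S. destruct IHB as [[H1 H2]|[i [H1 [H2 [H3 H4]]]]].
    + rewrite H1. simpl. destruct (E B) eqn:EB.
      * left. split; auto. intros j hj. destruct (Nat.eq_dec j B); subst; auto. apply H2. lia.
      * right. exists B. repeat split; auto; lia.
    + right. exists i. rewrite H4. unfold ifz. destruct (E i); [congruence|]. repeat split; auto.
Qed.

Lemma firstnz_ext E E' B : (forall j, j < B -> E j = E' j) -> firstnz E B = firstnz E' B.
Proof. intros H. induction B. reflexivity. rewrite !firstnz_S, IHB by auto. rewrite H; auto. Qed.

Lemma count_ext E E' B : (forall j, j < B -> E j = E' j) -> count E B = count E' B.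
Proof. intros H. induction B. reflexivity. rewrite !count_S, IHB by auto. rewrite H; auto. Qed.

Lemma least_nz (f : nat -> nat) k : f k <> 0 -> exists k0, f k0 <> 0 /\ forall j, j < k0 -> f j = 0.
Proof.
  intros Hk. destruct (firstnz_spec f (S k)) as [[_ H]|[i [_ [H1 [H2 _]]]]].
  - exfalso. apply Hk, H. lia.
  - exists i. auto.
Qed.

Lemma length_prefix p k : length (prefix p k) = k.
Proof. unfold prefix. rewrite length_map, length_seq. auto. Qed.
Lemma nth_prefix p k i : i < k -> nth i (prefix p k) 0 = p i.
Proof. intros h. unfold prefix. rewrite nth_indep with (d' := p 0) by (rewrite length_map, length_seq; auto).
  rewrite map_nth, seq_nth; auto. Qed.

Definition cmapf (phi : nat -> nat -> nat) c := cbuild (fun i => phi i (cnth c i)) (clen c).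

Lemma cmapf_prefix phi p k : cmapf phi (code (prefix p k)) = code (prefix (fun i => phi i (p i)) k).
Proof.
  unfold cmapf. rewrite cbuild_code, clen_code, length_prefix. f_equal.
  change (prefix (fun i => phi i (p i)) k) with (map (fun i => phi i (p i)) (seq 0 k)).
  apply map_ext_in. intros i hi. apply in_seq in hi.
  rewrite cnth_code, nth_prefix by lia. reflexivity.
Qed.

Definition aP (phi : nat -> nat -> nat) (a : nat -> nat) (m : nat) : nat :=
  a (to_nat (u1 m, cmapf phi (u2 m))).

Lemma aP_spec phi a p r : assoc_fun a (fun i => phi i (p i)) r -> assoc_fun (aP phi a) p r.
Proof.
  intros H n. destruct (H n) as [k [H1 H2]]. exists k. unfold aP.
  rewrite u1_to, u2_to, cmapf_prefix. split; auto.
  intros j hj. rewrite u1_to, u2_to, cmapf_prefix. auto.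
Qed.

Definition aplus (a : nat -> nat) (m : nat) : nat := ifz (a m) 0 (S (a m)).

Lemma aplus_spec a p q : assoc_fun a p q -> assoc_fun (aplus a) p (fun i => S (q i)).
Proof.
  intros H n. destruct (H n) as [k [H1 H2]]. exists k. unfold aplus. rewrite H1. split; auto.
  intros j hj. rewrite H2; auto.
Qed.

Definition eqbf a b := ifz (a - b + (b - a)) 1 0.
Lemma eqbf_spec a b : eqbf a b = if a =? b then 1 else 0.
Proof. unfold eqbf. destruct (Nat.eqb_spec a b). subst. rewrite Nat.sub_diag. reflexivity.
  destruct (a - b + (b - a)) eqn:E; [lia|reflexivity]. Qed.
Definition ltbf a b := ifz (S a - b) 1 0.
Lemma ltbf_spec a b : ltbf a b = if a <? b then 1 else 0.
Proof. unfold ltbf. destruct (Nat.ltb_spec a b). replace (S a - b) with 0 by lia. reflexivity.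
  destruct (S a - b) eqn:E; [lia|reflexivity]. Qed.

Definition ccnt c j := count (fun j' => cnth c j') j.

Lemma ccnt_prefix t k j : j <= k -> ccnt (code (prefix t k)) j = cnt t j.
Proof.
  induction j; intros h. reflexivity. unfold ccnt in *. rewrite count_S, IHj by lia.
  simpl. rewrite cnth_code, nth_prefix by lia. destruct (t j); reflexivity.
Qed.

Lemma cnt_unique t a b : 0 < t a -> 0 < t b -> cnt t a = cnt t b -> a = b.
Proof.
  intros Ha Hb E. destruct (Nat.lt_trichotomy a b) as [h|[h|h]]; auto.
  - pose proof (cnt_mono t (S a) b h). rewrite cnt_pos in * by auto. lia.
  - pose proof (cnt_mono t (S b) a h). rewrite cnt_pos in * by auto. lia.
Qed.

Definition aM1 (m : nat) : nat :=
  firstnz (fun j => ifz (cnth (u2 m) j) 0 (ifz (eqbf (ccnt (u2 m) j) (u1 m)) 0 (cnth (u2 m) j)))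
    (clen (u2 m)).

Lemma aM1_spec t w : minus1 t w -> assoc_fun aM1 t w.
Proof.
  intros H i. destruct (H i) as [m0 [P0 [C0 W0]]].
  set (e := fun j => ifz (t j) 0 (ifz (eqbf (cnt t j) i) 0 (t j))).
  assert (He0 : e m0 = t m0).
  { unfold e. rewrite eqbf_spec, C0, Nat.eqb_refl. destruct (t m0); [lia|reflexivity]. }
  assert (He : forall j, j < m0 -> e j = 0).
  { intros j hj. unfold e. rewrite eqbf_spec. destruct (t j) eqn:Tj. reflexivity.
    destruct (Nat.eqb_spec (cnt t j) i). assert (j = m0) by (apply cnt_unique with t; lia). lia.
    reflexivity. }
  assert (Hv : forall k, aM1 (to_nat (i, code (prefix t k))) = if m0 <? k then t m0 else 0).
  { intros k. unfold aM1. rewrite u1_to, u2_to, clen_code, length_prefix.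
    rewrite (firstnz_ext _ e).
    - rewrite (firstnz_first e m0); auto. rewrite He0. reflexivity. lia.
    - intros j hj. unfold e. rewrite cnth_code, nth_prefix, ccnt_prefix by lia. reflexivity. }
  exists (S m0). rewrite Hv. replace (m0 <? S m0) with true by (symmetry; apply Nat.ltb_lt; lia).
  split. lia. intros j hj. rewrite Hv. replace (m0 <? j) with false by (symmetry; apply Nat.ltb_ge; lia). auto.
Qed.

Lemma ifz_0 a b : ifz 0 a b = a. Proof. reflexivity. Qed.
Lemma ifz_S n a b : ifz (S n) a b = b. Proof. reflexivity. Qed.
Ltac sifz := cbv iota; rewrite ?ifz_0, ?ifz_S.

Definition oddf (n : nat) : nat := nat_rec (fun _ => nat) 0 (fun _ r => ifz r 1 0) n.
Definition div2f (n : nat) : nat := nat_rec (fun _ => nat) 0 (fun i r => r + oddf i) n.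

Lemma oddf_div2f n : (oddf n = (if Nat.even n then 0 else 1) /\ div2f n = Nat.div2 n) /\
                     (oddf (S n) = (if Nat.even (S n) then 0 else 1) /\ div2f (S n) = Nat.div2 (S n)).
Proof.
  induction n.
  - simpl. auto.
  - destruct IHn as [[A1 A2] [B1 B2]]. split; [split; auto|].
    change (oddf (S (S n))) with (ifz (oddf (S n)) 1 0).
    change (div2f (S (S n))) with (div2f (S n) + oddf (S n)).
    change (div2f (S n)) with (div2f n + oddf n) in *.
    change (oddf (S n)) with (ifz (oddf n) 1 0) in *.
    change (Nat.even (S (S n))) with (Nat.even n). change (Nat.div2 (S (S n))) with (S (Nat.div2 n)).
    rewrite A1. rewrite A1 in B2. rewrite A2 in *. destruct (Nat.even n); simpl; split; lia.
Qed.
Lemma oddf_spec n : oddf n = if Nat.even n then 0 else 1.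
Proof. apply oddf_div2f. Qed.
Lemma div2f_spec n : div2f n = Nat.div2 n.
Proof. apply oddf_div2f. Qed.

Definition ocnt c j := count (fun j' => ifz (oddf j') 0 (cnth c j')) j.

Lemma even_2 a : Nat.even (2 * a) = true.
Proof. rewrite Nat.even_mul. reflexivity. Qed.
Lemma even_2S a : Nat.even (S (2 * a)) = false.
Proof. rewrite Nat.even_succ, Nat.odd_mul. reflexivity. Qed.
Lemma div2_2 a : Nat.div2 (2 * a) = a.
Proof. apply Nat.div2_double. Qed.
Lemma div2_2S a : Nat.div2 (S (2 * a)) = a.
Proof. apply Nat.div2_succ_double. Qed.

Lemma even_or_odd n : exists a, n = 2 * a \/ n = S (2 * a).
Proof. induction n. exists 0. auto. destruct IHn as [a [->| ->]]. exists a. auto. exists (S a). left. lia. Qed.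

Lemma bjoin_even p s a : bjoin p s (2 * a) = p a.
Proof. unfold bjoin. rewrite even_2, div2_2. auto. Qed.
Lemma bjoin_odd p s a : bjoin p s (S (2 * a)) = s a.
Proof. unfold bjoin. rewrite even_2S, div2_2S. auto. Qed.

Lemma ocnt_prefix p s k j : j <= k -> ocnt (code (prefix (bjoin p s) k)) j = cnt s (Nat.div2 j).
Proof.
  induction j; intros h. reflexivity. unfold ocnt in *. rewrite count_S, IHj by lia.
  rewrite cnth_code, nth_prefix by lia. rewrite oddf_spec.
  destruct (even_or_odd j) as [a [-> | ->]].
  - rewrite even_2. sifz. replace (S (2 * a)) with (S (2*a)) by reflexivity. rewrite div2_2S, div2_2. lia.
  - rewrite even_2S. sifz. rewrite bjoin_odd, div2_2S. replace (S (S (2 * a))) with (2 * S a) by lia.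
    rewrite div2_2. simpl cnt. destruct (s a); simpl; lia.
Qed.

Definition aM2 (m : nat) : nat :=
  ifz (oddf (u1 m))
    (ifz (ltbf (u1 m) (clen (u2 m))) 0 (S (cnth (u2 m) (u1 m))))
    (firstnz (fun j => ifz (oddf j) 0 (ifz (cnth (u2 m) j) 0
                        (ifz (eqbf (ocnt (u2 m) j) (div2f (u1 m))) 0 (cnth (u2 m) j))))
       (clen (u2 m))).

Lemma aM2_spec p s' s : minus1 s' s -> assoc_fun aM2 (bjoin p s') (bjoin p s).
Proof.
  intros H n. destruct (even_or_odd n) as [a [-> | ->]].
  - exists (S (2 * a)). unfold aM2. rewrite !u1_to, !u2_to, clen_code, length_prefix, oddf_spec, even_2.
    sifz. rewrite ltbf_spec. replace (2 * a <? S (2 * a)) with true by (symmetry; apply Nat.ltb_lt; lia).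
    sifz. rewrite cnth_code, nth_prefix by lia. rewrite !bjoin_even. split; auto.
    intros j hj. rewrite !u1_to, !u2_to, clen_code, length_prefix, oddf_spec, even_2. sifz.
    rewrite ltbf_spec. replace (2 * a <? j) with false by (symmetry; apply Nat.ltb_ge; lia). reflexivity.
  - destruct (H a) as [m0 [P0 [C0 W0]]].
    set (e := fun j => ifz (oddf j) 0 (ifz (bjoin p s' j) 0
                        (ifz (eqbf (cnt s' (Nat.div2 j)) a) 0 (bjoin p s' j)))).
    assert (He0 : e (S (2 * m0)) = s' m0).
    { unfold e. rewrite oddf_spec, even_2S, bjoin_odd, div2_2S, eqbf_spec, C0, Nat.eqb_refl.
      simpl. destruct (s' m0); [lia|reflexivity]. }
    assert (He : forall j, j < S (2 * m0) -> e j = 0).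
    { intros j hj. unfold e. rewrite oddf_spec. destruct (even_or_odd j) as [b [-> | ->]].
      - rewrite even_2. reflexivity.
      - rewrite even_2S. sifz. rewrite bjoin_odd, div2_2S, eqbf_spec. destruct (s' b) eqn:Sb. reflexivity.
        sifz. destruct (Nat.eqb_spec (cnt s' b) a); [|reflexivity].
        assert (b = m0) by (apply cnt_unique with s'; lia). lia. }
    assert (Hv : forall k, aM2 (to_nat (S (2 * a), code (prefix (bjoin p s') k))) =
                           if S (2 * m0) <? k then s' m0 else 0).
    { intros k. unfold aM2. rewrite u1_to, u2_to, oddf_spec, even_2S. sifz.
      rewrite clen_code, length_prefix, div2f_spec, div2_2S.
      rewrite (firstnz_ext _ e).
      - rewrite (firstnz_first e (S (2 * m0))); auto. rewrite He0. reflexivity. lia.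
      - intros j hj. unfold e. rewrite cnth_code, nth_prefix, ocnt_prefix by lia. reflexivity. }
    exists (S (S (2 * m0))). rewrite Hv. replace (S (2 * m0) <? S (S (2 * m0))) with true by (symmetry; apply Nat.ltb_lt; lia).
    rewrite bjoin_odd. split. lia. intros j hj. rewrite Hv. replace (S (2 * m0) <? j) with false by (symmetry; apply Nat.ltb_ge; lia). auto.
Qed.

Definition ctake c k' := cbuild (fun i => cnth c i) k'.
Definition qv (a1 : nat -> nat) c j := firstnz (fun k' => a1 (to_nat (j, ctake c k'))) (S (clen c)).
Definition dall a1 c L := ifz (firstnz (fun j => ifz (qv a1 c j) 1 0) L) 1 0.
Definition qpre a1 c L := cbuild (fun j => pred (qv a1 c j)) L.
Definition evc a1 a2 n c L :=
  ifz (dall a1 c L) 1 (ifz (a2 (to_nat (n, qpre a1 c L))) 0 (S (a2 (to_nat (n, qpre a1 c L))))).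
Definition acomp (a1 a2 : nat -> nat) (m : nat) : nat :=
  pred (firstnz (evc a1 a2 (u1 m) (u2 m)) (S (clen (u2 m)))).

Lemma ctake_prefix p k k' : k' <= k -> ctake (code (prefix p k)) k' = code (prefix p k').
Proof.
  intros h. unfold ctake. rewrite cbuild_code. f_equal. unfold prefix at 2.
  apply map_ext_in. intros i hi. apply in_seq in hi. rewrite cnth_code, nth_prefix by lia. auto.
Qed.


Lemma acomp_spec a1 a2 p q r : assoc_fun a1 p q -> assoc_fun a2 q r -> assoc_fun (acomp a1 a2) p r.
Proof.
  intros H1 H2 n.
  destruct (H2 n) as [L0 [HL0 HL0']].
  assert (Hq : forall k j, qv a1 (code (prefix p k)) j = 0 \/ qv a1 (code (prefix p k)) j = S (q j)).
  { intros k j. destruct (H1 j) as [kj [A B]]. unfold qv. rewrite clen_code, length_prefix.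
    rewrite (firstnz_ext _ (fun k' => a1 (to_nat (j, code (prefix p k'))))).
    - rewrite (firstnz_first _ kj); [| rewrite A; lia | auto]. destruct (kj <? S k); auto.
    - intros k' hk. rewrite ctake_prefix by lia. auto. }
  assert (Hq2 : forall k j, (exists kj, kj <= k /\ a1 (to_nat (j, code (prefix p kj))) = S (q j) /\
                 forall k', k' < kj -> a1 (to_nat (j, code (prefix p k'))) = 0) ->
                 qv a1 (code (prefix p k)) j = S (q j)).
  { intros k j [kj [hk [A B]]]. unfold qv. rewrite clen_code, length_prefix.
    rewrite (firstnz_ext _ (fun k' => a1 (to_nat (j, code (prefix p k'))))).
    - rewrite (firstnz_first _ kj); [| rewrite A; lia | auto].
      replace (kj <? S k) with true by (symmetry; apply Nat.ltb_lt; lia). auto.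
    - intros k' hk'. rewrite ctake_prefix by lia. auto. }
  assert (Hd : forall k L, dall a1 (code (prefix p k)) L <> 0 <-> forall j, j < L -> qv a1 (code (prefix p k)) j <> 0).
  { intros k L. unfold dall. destruct (firstnz_spec (fun j => ifz (qv a1 (code (prefix p k)) j) 1 0) L)
      as [[E1 E2]|[i [E1 [E2 [E3 E4]]]]].
    - rewrite E1. sifz. split; [|lia]. intros _ j hj. specialize (E2 j hj). intro c. rewrite c in E2. discriminate.
    - rewrite E4. cbv beta in *. destruct (qv a1 (code (prefix p k)) i) eqn:Qi; [|exfalso; apply E2; try rewrite Qi; reflexivity].
      sifz. split; [lia|]. intros h. exfalso. apply (h i E1). auto. }
  assert (Hqp : forall k L, dall a1 (code (prefix p k)) L <> 0 -> qpre a1 (code (prefix p k)) L = code (prefix q L)).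
  { intros k L h. rewrite Hd in h. unfold qpre. rewrite cbuild_code. f_equal. change (prefix q L) with (map q (seq 0 L)).
    apply map_ext_in. intros j hj. apply in_seq in hj. specialize (h j ltac:(lia)).
    destruct (Hq k j) as [e|e]; rewrite e in *; [lia|reflexivity]. }
  assert (Hmono : forall k L L', L <= L' -> dall a1 (code (prefix p k)) L' <> 0 -> dall a1 (code (prefix p k)) L <> 0).
  { intros k L L' hl h. rewrite Hd in *. intros j hj. apply h. lia. }
  set (V := fun k => acomp a1 a2 (to_nat (n, code (prefix p k)))).
  assert (HV : forall k, V k = firstnz (evc a1 a2 n (code (prefix p k))) (S k) - 1).
  { intros k. unfold V, acomp. rewrite u1_to, u2_to, clen_code, length_prefix. lia. }
  assert (Hev : forall k L, dall a1 (code (prefix p k)) L <> 0 ->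
             evc a1 a2 n (code (prefix p k)) L = ifz (a2 (to_nat (n, code (prefix q L)))) 0 (S (a2 (to_nat (n, code (prefix q L)))))).
  { intros k L h. unfold evc. rewrite Hqp by auto. destruct (dall a1 (code (prefix p k)) L); [lia|]. reflexivity. }
  assert (Hev1 : forall k L, dall a1 (code (prefix p k)) L = 0 -> evc a1 a2 n (code (prefix p k)) L = 1).
  { intros k L h. unfold evc. rewrite h. reflexivity. }
  assert (Ha : forall k, V k = 0 \/ V k = S (r n)).
  { intros k. rewrite HV. destruct (firstnz_spec (evc a1 a2 n (code (prefix p k))) (S k))
      as [[E1 E2]|[i [E1 [E2 [E3 E4]]]]].
    - rewrite E1. auto.
    - rewrite E4. destruct (Nat.eq_dec (dall a1 (code (prefix p k)) i) 0) as [D|D].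
      + rewrite Hev1 by auto. auto.
      + rewrite Hev by auto. destruct (Nat.lt_trichotomy i L0) as [hi|[hi|hi]].
        * rewrite HL0' by auto. auto.
        * subst. rewrite HL0. right. reflexivity.
        * exfalso. assert (E5 := E3 L0 hi). rewrite Hev in E5 by (apply Hmono with i; auto; lia).
          rewrite HL0 in E5. discriminate. }
  assert (HK : forall L, exists K, L <= K /\ forall j, j < L -> exists kj, kj <= K /\
             a1 (to_nat (j, code (prefix p kj))) = S (q j) /\
             forall k', k' < kj -> a1 (to_nat (j, code (prefix p k'))) = 0).
  { induction L. exists 0. split; auto. intros; lia.
    destruct IHL as [K [hK HK]]. destruct (H1 L) as [kL [A B]].
    exists (S (K + kL)). split. lia. intros j hj.
    destruct (Nat.eq_dec j L). subst. exists kL. split; auto. lia.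
    destruct (HK j ltac:(lia)) as [kj [h1 h2]]. exists kj. split; auto. lia. }
  destruct (HK L0) as [K0 [hK0 HK0]].
  assert (Hb : V K0 = S (r n)).
  { assert (D : dall a1 (code (prefix p K0)) L0 <> 0).
    { apply Hd. intros j hj. rewrite Hq2. lia. apply HK0; auto. }
    rewrite HV. destruct (firstnz_spec (evc a1 a2 n (code (prefix p K0))) (S K0))
      as [[E1 E2]|[i [E1 [E2 [E3 E4]]]]].
    - exfalso. assert (E5 := E2 L0 ltac:(lia)). rewrite Hev, HL0 in E5 by auto. discriminate.
    - rewrite E4. destruct (Nat.lt_trichotomy i L0) as [hi|[hi|hi]].
      + exfalso. apply E2. rewrite Hev by (apply Hmono with L0; auto; lia). rewrite HL0' by auto. reflexivity.
      + subst. rewrite Hev, HL0 by auto. reflexivity.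
      + exfalso. assert (E5 := E3 L0 hi). rewrite Hev, HL0 in E5 by auto. discriminate. }
  destruct (least_nz V K0) as [k [Hk1 Hk2]]. rewrite Hb; lia.
  exists k. split.
  - destruct (Ha k); [contradiction|auto].
  - intros j hj. apply (Hk2 j hj).
Qed.


Definition EEqb a b := EIfz (EAdd (ESub a b) (ESub b a)) (EConst 1) Zero.
Definition ELtb a b := EIfz (ESub (Succ a) b) (EConst 1) Zero.
Definition EOdd e := Rec e Zero (EIfz (Var 1) (EConst 1) Zero).
Definition EDiv2 e := Rec e Zero (EAdd (Var 1) (EOdd (Var 0))).
Definition ECcnt c j := ECount j (ENth (lift 0 1 c) (Var 0)).
Definition EOcnt c j := ECount j (EIfz (EOdd (Var 0)) Zero (ENth (lift 0 1 c) (Var 0))).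
Definition ECmap (Phi : exp) c := EBuild (EClen c) (ELet (ENth (lift 0 1 c) (Var 0)) Phi).

Lemma eval_Var j env : eval (Var j) env = nth j env 0. Proof. reflexivity. Qed.
Lemma eval_Zero env : eval Zero env = 0. Proof. reflexivity. Qed.
Lemma eval_Succ e env : eval (Succ e) env = S (eval e env). Proof. reflexivity. Qed.
Lemma eval_Fn a H e env : eval (Fn a H e) env = a (eval e env). Proof. reflexivity. Qed.

Lemma eval_EEqb a b env : eval (EEqb a b) env = eqbf (eval a env) (eval b env).
Proof. unfold EEqb. rewrite eval_EIfz, eval_EAdd, !eval_ESub, eval_EConst. reflexivity. Qed.
Lemma eval_ELtb a b env : eval (ELtb a b) env = ltbf (eval a env) (eval b env).
Proof. unfold ELtb. rewrite eval_EIfz, eval_ESub, eval_EConst. reflexivity. Qed.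
Lemma eval_Rec B z s env g : (forall i r, eval s (i :: r :: env) = g i r) ->
  eval (Rec B z s) env = nat_rec (fun _ => nat) (eval z env) g (eval B env).
Proof.
  intros H. simpl. f_equal. extensionality i. extensionality r. auto.
Qed.
Lemma eval_EOdd e env : eval (EOdd e) env = oddf (eval e env).
Proof.
  unfold EOdd, oddf. rewrite (eval_Rec _ _ _ _ (fun _ r => ifz r 1 0)). reflexivity.
  intros i r. rewrite eval_EIfz. reflexivity.
Qed.
Lemma eval_EDiv2 e env : eval (EDiv2 e) env = div2f (eval e env).
Proof.
  unfold EDiv2, div2f. rewrite (eval_Rec _ _ _ _ (fun i r => r + oddf i)). reflexivity.
  intros i r. rewrite eval_EAdd, eval_EOdd. reflexivity.
Qed.

Ltac ev_hook := fail.
Ltac ev :=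
  let side := (intros; match goal with |- _ = ?R => let x := fresh "x" in set (x := R); ev; subst x; reflexivity end) in
  repeat first
   [ rewrite eval_Var | rewrite eval_Zero | rewrite eval_Succ | rewrite eval_Fn
   | rewrite eval_EConst | rewrite eval_EPred | rewrite eval_EAdd | rewrite eval_ESub
   | rewrite eval_EIfz | rewrite eval_ET | rewrite eval_EToNat | rewrite eval_L1
   | rewrite eval_EU1 | rewrite eval_EU2 | rewrite eval_EChd | rewrite eval_ECtl
   | rewrite eval_EItl | rewrite eval_EClen | rewrite eval_ENth
   | rewrite eval_EEqb | rewrite eval_ELtb | rewrite eval_EOdd | rewrite eval_EDiv2
   | ev_hook
   | (erewrite eval_ELet; [|side])
   | (erewrite eval_EFirst; [|side])
   | (erewrite eval_ECount; [|side])
   | (erewrite eval_EBuild; [|side]) ];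
  cbn [nth].

Lemma eval_ECcnt c j env : eval (ECcnt c j) env = ccnt (eval c env) (eval j env).
Proof. unfold ECcnt, ccnt. ev. reflexivity. Qed.
Lemma eval_EOcnt c j env : eval (EOcnt c j) env = ocnt (eval c env) (eval j env).
Proof. unfold EOcnt, ocnt. ev. reflexivity. Qed.
Lemma eval_ECmap Phi phi c env : (forall v i, eval Phi (v :: i :: env) = phi i v) ->
  eval (ECmap Phi c) env = cmapf phi (eval c env).
Proof. intros H. unfold ECmap, cmapf. ev. f_equal. extensionality j. apply H. Qed.

Lemma comp_ext f g : (forall m, f m = g m) -> computable_nat f -> computable_nat g.
Proof. intros H [c Hc]. exists c. intros n. rewrite <- H. auto. Qed.

Lemma exp_computable' (e : exp) f : (forall m, eval e [m] = f m) -> computable_nat f.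
Proof. intros H. apply comp_ext with (fun m => eval e [m]); auto. apply exp_computable. Qed.

Lemma aplus_comp a : computable_nat a -> computable_nat (aplus a).
Proof.
  intros Ha. apply (exp_computable' (EIfz (Fn a Ha (Var 0)) Zero (Succ (Fn a Ha (Var 0))))).
  intros m. ev. reflexivity.
Qed.

Lemma aP_comp (Phi : exp) phi a : (forall v i env, eval Phi (v :: i :: env) = phi i v) ->
  computable_nat a -> computable_nat (aP phi a).
Proof.
  intros HPhi Ha. apply (exp_computable' (Fn a Ha (EToNat (EU1 (Var 0)) (ECmap Phi (EU2 (Var 0)))))).
  intros m. ev. rewrite (eval_ECmap Phi phi) by auto. ev. reflexivity.
Qed.

Lemma aM1_comp : computable_nat aM1.
Proof.
  apply (exp_computable' (EFirst (EClen (EU2 (Var 0)))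
     (EIfz (ENth (EU2 (Var 1)) (Var 0)) Zero
        (EIfz (EEqb (ECcnt (EU2 (Var 1)) (Var 0)) (EU1 (Var 1))) Zero (ENth (EU2 (Var 1)) (Var 0)))))).
  intros m. ev. unfold aM1. apply firstnz_ext. intros j _. ev. rewrite eval_ECcnt. ev. reflexivity.
Qed.

Ltac ev_hook ::= first [rewrite eval_ECcnt | rewrite eval_EOcnt].

Lemma aM2_comp : computable_nat aM2.
Proof.
  apply (exp_computable' (EIfz (EOdd (EU1 (Var 0)))
  (EIfz (ELtb (EU1 (Var 0)) (EClen (EU2 (Var 0)))) Zero (Succ (ENth (EU2 (Var 0)) (EU1 (Var 0)))))
  (EFirst (EClen (EU2 (Var 0)))
     (EIfz (EOdd (Var 0)) Zero (EIfz (ENth (EU2 (Var 1)) (Var 0)) Zero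
        (EIfz (EEqb (EOcnt (EU2 (Var 1)) (Var 0)) (EDiv2 (EU1 (Var 1)))) Zero (ENth (EU2 (Var 1)) (Var 0)))))))).
  intros m. ev. reflexivity.
Qed.

Definition ETake c k' := EBuild k' (ENth (lift 0 1 c) (Var 0)).
Definition EQv a1 (H1 : computable_nat a1) c j :=
  EFirst (Succ (EClen c)) (Fn a1 H1 (EToNat (lift 0 1 j) (ETake (lift 0 1 c) (Var 0)))).
Definition EDall a1 H1 c L := EIfz (EFirst L (EIfz (EQv a1 H1 (lift 0 1 c) (Var 0)) (EConst 1) Zero)) (EConst 1) Zero.
Definition EQpre a1 H1 c L := EBuild L (EPred (EQv a1 H1 (lift 0 1 c) (Var 0))).
Definition EEvc a1 H1 a2 H2 n c L :=
  EIfz (EDall a1 H1 c L) (EConst 1)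
    (EIfz (Fn a2 H2 (EToNat n (EQpre a1 H1 c L))) Zero (Succ (Fn a2 H2 (EToNat n (EQpre a1 H1 c L))))).

Lemma eval_ETake c k env : eval (ETake c k) env = ctake (eval c env) (eval k env).
Proof. unfold ETake. ev. reflexivity. Qed.
Ltac ev_hook ::= first [rewrite eval_ECcnt | rewrite eval_EOcnt | rewrite eval_ETake].
Lemma eval_EQv a1 H1 c j env : eval (EQv a1 H1 c j) env = qv a1 (eval c env) (eval j env).
Proof. unfold EQv. ev. reflexivity. Qed.
Ltac ev_hook ::= first [rewrite eval_ECcnt | rewrite eval_EOcnt | rewrite eval_ETake | rewrite eval_EQv].
Lemma eval_EDall a1 H1 c L env : eval (EDall a1 H1 c L) env = dall a1 (eval c env) (eval L env).
Proof. unfold EDall. ev. reflexivity. Qed.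
Lemma eval_EQpre a1 H1 c L env : eval (EQpre a1 H1 c L) env = qpre a1 (eval c env) (eval L env).
Proof. unfold EQpre. ev. reflexivity. Qed.
Ltac ev_hook ::= first [rewrite eval_ECcnt | rewrite eval_EOcnt | rewrite eval_ETake | rewrite eval_EQv
  | rewrite eval_EDall | rewrite eval_EQpre].
Lemma eval_EEvc a1 H1 a2 H2 n c L env : eval (EEvc a1 H1 a2 H2 n c L) env = evc a1 a2 (eval n env) (eval c env) (eval L env).
Proof. unfold EEvc. ev. reflexivity. Qed.
Ltac ev_hook ::= first [rewrite eval_ECcnt | rewrite eval_EOcnt | rewrite eval_ETake | rewrite eval_EQv
  | rewrite eval_EDall | rewrite eval_EQpre | rewrite eval_EEvc].

Lemma acomp_comp a1 a2 : computable_nat a1 -> computable_nat a2 -> computable_nat (acomp a1 a2).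
Proof.
  intros H1 H2.
  apply (exp_computable' (EPred (EFirst (Succ (EClen (EU2 (Var 0)))) (EEvc a1 H1 a2 H2 (EU1 (Var 1)) (EU2 (Var 1)) (Var 0))))).
  intros m. ev. reflexivity.
Qed.


Lemma assoc_fun_fun a p q1 q2 : assoc_fun a p q1 -> assoc_fun a p q2 -> q1 = q2.
Proof.
  intros H1 H2. extensionality n. destruct (H1 n) as [k1 [A1 B1]]. destruct (H2 n) as [k2 [A2 B2]].
  destruct (Nat.lt_trichotomy k1 k2) as [h|[h|h]].
  - rewrite B2 in A1 by auto. discriminate.
  - subst. congruence.
  - rewrite B1 in A2 by auto. discriminate.
Qed.

Lemma prefix_eq P P' k : (forall i, i < k -> P i = P' i) -> prefix P k = prefix P' k.
Proof. intros H. unfold prefix. apply map_ext_in. intros i hi. apply in_seq in hi. apply H. lia. Qed.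

Lemma assoc_local a P P' r r' n kn :
  assoc_fun a P' r' ->
  a (to_nat (n, code (prefix P kn))) = S (r n) ->
  (forall j, j < kn -> a (to_nat (n, code (prefix P j))) = 0) ->
  (forall i, i < kn -> P i = P' i) -> r' n = r n.
Proof.
  intros H' A Bz E. destruct (H' n) as [k' [A' B']].
  assert (Ej : forall j, j <= kn -> prefix P j = prefix P' j).
  { intros j hj. apply prefix_eq. intros i hi. apply E. lia. }
  destruct (Nat.lt_trichotomy k' kn) as [h|[h|h]].
  - rewrite <- Ej in A' by lia. rewrite Bz in A' by auto. discriminate.
  - subst. rewrite <- Ej in A' by lia. congruence.
  - assert (Z := B' kn h). rewrite <- Ej in Z by lia. congruence.
Qed.

Lemma div2_le i : Nat.div2 i <= i.
Proof. destruct (even_or_odd i) as [a [-> | ->]]; [rewrite div2_2 | rewrite div2_2S]; lia. Qed.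

Lemma bjoin_agree p p' s s' k : (forall i, i < k -> p i = p' i) -> (forall i, i < k -> s i = s' i) ->
  forall i, i < k -> bjoin p s i = bjoin p' s' i.
Proof.
  intros Hp Hs i hi. unfold bjoin. pose proof (div2_le i).
  destruct (Nat.even i); [apply Hp|apply Hs]; lia.
Qed.

Definition over (G : B -> B -> Prop) (t s0 : B) : B -> B -> Prop :=
  fun q s => (q = t /\ s = s0) \/ (q <> t /\ G q s).

Lemma over_pf G t s0 : partial_fun G -> partial_fun (over G t s0).
Proof. intros H q s1 s2 [[-> ->]|[h1 h2]] [[e ->]|[h3 h4]]; auto; try contradiction. eauto. Qed.

Lemma over_real {U V : rep} (g : problem U V) G t s0 : realizes G g ->
  (forall x, delta U t x -> dom g x -> exists y, delta V s0 y /\ g x y) -> realizes (over G t s0) g.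
Proof.
  intros HG Ht p x Hp Hd. destruct (classic (p = t)) as [e|e].
  - subst. destruct (Ht x Hp Hd) as [y [h1 h2]]. exists s0, y. split; auto. left; auto.
  - destruct (HG p x Hp Hd) as [q [y [h1 [h2 h3]]]]. exists q, y. split; auto. right; auto.
Qed.

Definition pickf {U V : rep} (g : problem U V) (q : B) : B :=
  epsilon (inhabits (fun _ : nat => 0)) (fun s => exists u v, delta U q u /\ g u v /\ delta V s v).

Definition PR {U V : rep} (g : problem U V) : B -> B -> Prop :=
  fun q s => (exists u v, delta U q u /\ g u v /\ delta V s v) /\ s = pickf g q.

Lemma PR_pf {U V : rep} (g : problem U V) : partial_fun (PR g).
Proof. intros q s1 s2 [_ ->] [_ ->]. auto. Qed.

Lemma PR_real {U V : rep} (g : problem U V) : realizes (PR g) g.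
Proof.
  intros p x Hp [v Hv]. destruct (delta_surj V v) as [s Hs].
  assert (E : exists s, exists u v, delta U p u /\ g u v /\ delta V s v) by (exists s, x, v; auto).
  pose proof (epsilon_spec (inhabits (fun _ : nat => 0)) _ E) as Sp. fold (pickf g p) in Sp.
  destruct Sp as [u [v' [h1 [h2 h3]]]]. pose proof (delta_fun U p x u Hp h1). subst.
  exists (pickf g p), v'. repeat split; auto. exists u, v'. auto.
Qed.

Definition weih_data {X Y U V : rep} (h : problem X Y) (g : problem U V) (H K : B -> B -> Prop) : Prop :=
  forall G, partial_fun G -> realizes G g ->
    realizes (fun p r => exists q s, K p q /\ G q s /\ H (bjoin p s) r) h.

Lemma red_use {X Y U V : rep} (h : problem X Y) (g : problem U V) aH aK G p x t s :
  weih_data h g (assoc_fun aH) (assoc_fun aK) -> partial_fun G -> realizes G g ->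
  delta X p x -> dom h x -> assoc_fun aK p t -> G t s ->
  exists r y, assoc_fun aH (bjoin p s) r /\ delta Y r y /\ h x y.
Proof.
  intros W HG RG Hp Hd Kt Gt. destruct (W G HG RG p x Hp Hd) as [r [y [[q [s' [h1 [h2 h3]]]] [h4 h5]]]].
  pose proof (assoc_fun_fun _ _ _ _ h1 Kt). subst q. pose proof (HG _ _ _ h2 Gt). subst s'.
  exists r, y. auto.
Qed.

Lemma red_get {X Y U V : rep} (h : problem X Y) (g : problem U V) aH aK G p x :
  weih_data h g (assoc_fun aH) (assoc_fun aK) -> partial_fun G -> realizes G g ->
  delta X p x -> dom h x ->
  exists t s r y, assoc_fun aK p t /\ G t s /\ assoc_fun aH (bjoin p s) r /\ delta Y r y /\ h x y.
Proof.
  intros W HG RG Hp Hd. destruct (W G HG RG p x Hp Hd) as [r [y [[q [s' [h1 [h2 h3]]]] [h4 h5]]]].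
  exists q, s', r, y. auto.
Qed.

Definition mixp (p : B) (k : nat) (q : B) : B := fun i => if i <? k then p i else q (snd (of_nat i)).
Definition ovl (p0 : B) (k : nat) (p : B) : B := fun i => if i <? k then p0 i else p i.

Lemma to_nat_ge n j : n <= to_nat (n, j).
Proof. pose proof (to_nat_non_decreasing n j). lia. Qed.

Lemma mixp_name (X : rep) p k q x : delta X q x -> delta (jump_rep X) (mixp p k q) x.
Proof.
  intros H. exists q. split; auto. intros j. exists k. intros n hn. unfold mixp.
  pose proof (to_nat_ge n j). replace (to_nat (n, j) <? k) with false by (symmetry; apply Nat.ltb_ge; lia).
  rewrite cancel_of_to. reflexivity.
Qed.

Lemma ovl_name (X : rep) p0 k p x : delta (jump_rep X) p x -> delta (jump_rep X) (ovl p0 k p) x.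
Proof.
  intros [q [L D]]. exists q. split; auto. intros j. destruct (L j) as [N HN]. exists (N + k).
  intros n hn. unfold ovl. pose proof (to_nat_ge n j).
  replace (to_nat (n, j) <? k) with false by (symmetry; apply Nat.ltb_ge; lia). apply HN. lia.
Qed.

Lemma cdelta_total (V : rep) s : exists o, cdelta V s o.
Proof.
  destruct (classic (exists q x, minus1 s q /\ delta V q x)) as [[q [x [h1 h2]]]|h].
  - exists (Some x). exists q. auto.
  - exists None. exact h.
Qed.

Lemma cnt_S_all (w : B) n : cnt (fun i => S (w i)) n = n.
Proof. induction n; simpl; auto. rewrite IHn. simpl. lia. Qed.

Lemma minus1_S t : minus1 (fun i => S (t i)) t.
Proof. intros i. exists i. split. lia. split. apply cnt_S_all. lia. Qed.

Definition pad (k : nat) (w : B) : B := fun i => if i <? k then 0 else S (w (i - k)).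

Lemma cnt_pad k w i : cnt (pad k w) (i + k) = i.
Proof.
  assert (H0 : forall j, j <= k -> cnt (pad k w) j = 0).
  { induction j; intros h; simpl; auto. rewrite IHj by lia. unfold pad.
    replace (j <? k) with true by (symmetry; apply Nat.ltb_lt; lia). reflexivity. }
  induction i. simpl. apply H0. auto.
  replace (S i + k) with (S (i + k)) by lia. simpl. rewrite IHi. unfold pad.
  replace (i + k <? k) with false by (symmetry; apply Nat.ltb_ge; lia). simpl. lia.
Qed.

Lemma minus1_pad k w : minus1 (pad k w) w.
Proof.
  intros i. exists (i + k). split; [|split].
  - unfold pad. replace (i + k <? k) with false by (symmetry; apply Nat.ltb_ge; lia). lia.
  - apply cnt_pad.
  - unfold pad. replace (i + k <? k) with false by (symmetry; apply Nat.ltb_ge; lia).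
    replace (i + k - k) with i by lia. lia.
Qed.

Definition good_c {U V : rep} (g : problem U V) (t : B) : Prop :=
  exists u, cdelta U t (Some u) /\ dom g u.
Definition good_T {U V : rep} (g : problem U V) (t : B) : Prop :=
  exists u, delta U t u /\ dom g u.

Lemma bad_compl {U V : rep} (g : problem U V) t s : ~ good_c g t ->
  realizes (over (PR (pcompletion g)) t s) (pcompletion g).
Proof.
  intros Hb. apply over_real. apply PR_real. intros x Hx _. destruct (cdelta_total V s) as [o Ho].
  exists o. split; auto. intros u' -> Hd. exfalso. apply Hb. exists u'. split; auto.
Qed.

Lemma bad_total {U V : rep} (g : problem U V) t s : ~ good_T g t -> (exists v, delta V s v) ->
  realizes (over (PR (totalization g)) t s) (totalization g).
Proof.
  intros Hb [v Hv]. apply over_real. apply PR_real. intros x Hx _.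
  exists v. split; auto. intros Hd. exfalso. apply Hb. exists x. auto.
Qed.

Lemma PR_name {U V : rep} (g : problem U V) q s : PR g q s -> exists v, delta V s v.
Proof. intros [[u [v [_ [_ h]]]] _]. eauto. Qed.


Lemma easy_total {X Y U V : rep} (h : problem X Y) (g : problem U V) :
  weihrauch h g -> weihrauch h (totalization g).
Proof.
  intros [H [K [cH [cK W]]]]. exists H, K. split; auto. split; auto. intros G pG rG. apply W; auto.
  intros p x Hp [v Hv]. destruct (rG p x Hp) as [q [y [h1 [h2 h3]]]].
  - exists v. intros _. auto.
  - exists q, y. repeat split; auto. apply h3. exists v; auto.
Qed.

Lemma easy_compl {X Y U V : rep} (h : problem X Y) (g : problem U V) :
  weihrauch h g -> weihrauch h (pcompletion g).
Proof.
  intros [H [K [[aH [caH EH]] [[aK [caK EK]] W]]]]. subst H K.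
  exists (assoc_fun (acomp aM2 aH)), (assoc_fun (aplus aK)). split; [|split].
  - exists (acomp aM2 aH). split; auto. apply acomp_comp; auto. apply aM2_comp.
  - exists (aplus aK). split; auto. apply aplus_comp; auto.
  - intros G pG rG p x Hp Hd.
    destruct (red_get h g aH aK (PR g) p x W (PR_pf g) (PR_real g) Hp Hd)
      as [t [s0 [r0 [y0 [Kt [[[u [v0 [Hu [Hg Hv0]]]] _] _]]]]]].
    assert (Hc : cdelta U (fun i => S (t i)) (Some u)) by (exists t; split; [apply minus1_S|auto]).
    destruct (rG _ (Some u) Hc) as [s' [yy [Gs [Hs Hpc]]]].
    { exists (Some v0). intros u' e _. inversion e; subst. exists v0. auto. }
    destruct (Hpc u eq_refl (ex_intro _ v0 Hg)) as [v' [-> Hg']].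
    destruct Hs as [s [Hm Hs]].
    assert (Ro : realizes (over (PR g) t s) g).
    { apply over_real. apply PR_real. intros x' Hx' _. pose proof (delta_fun U t x' u Hx' Hu). subst.
      exists v'. auto. }
    destruct (red_use h g aH aK (over (PR g) t s) p x t s W (over_pf _ _ _ (PR_pf g)) Ro Hp Hd Kt
                (or_introl (conj eq_refl eq_refl))) as [r [y [Hr [Hy Hh]]]].
    exists r, y. split; auto. exists (fun i => S (t i)), s'. split; [|split]; auto.
    + apply aplus_spec; auto.
    + apply acomp_spec with (bjoin p s); auto. apply aM2_spec; auto.
Qed.

Definition phi0 (k cs : nat) (i v : nat) : nat := ifz (ltbf i k) v (cnth cs i).
Definition phib (k cs b : nat) (i v : nat) : nat :=
  ifz (oddf i) (ifz (ltbf (div2f i) k) v (cnth cs (div2f i))) (v + b).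

Lemma phi0_comp k cs a : computable_nat a -> computable_nat (aP (phi0 k cs) a).
Proof.
  apply (aP_comp (EIfz (ELtb (Var 1) (EConst k)) (Var 0) (ENth (EConst cs) (Var 1)))).
  intros v i env. ev. reflexivity.
Qed.
Lemma phib_comp k cs b a : computable_nat a -> computable_nat (aP (phib k cs b) a).
Proof.
  apply (aP_comp (EIfz (EOdd (Var 1)) (EIfz (ELtb (EDiv2 (Var 1)) (EConst k)) (Var 0)
                     (ENth (EConst cs) (EDiv2 (Var 1)))) (EAdd (Var 0) (EConst b)))).
  intros v i env. ev. reflexivity.
Qed.

Lemma phi0_ovl p0 k p : (fun i => phi0 k (code (prefix p0 k)) i (p i)) = ovl p0 k p.
Proof.
  extensionality i. unfold phi0, ovl. rewrite ltbf_spec. destruct (Nat.ltb_spec i k); auto.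
  simpl. rewrite cnth_code, nth_prefix; auto.
Qed.

Lemma phib_bjoin p0 k p s b : (fun i => phib k (code (prefix p0 k)) b i (bjoin p s i)) =
  bjoin (ovl p0 k p) (fun j => s j + b).
Proof.
  extensionality i. unfold phib. rewrite oddf_spec, div2f_spec, ltbf_spec.
  destruct (even_or_odd i) as [a [-> | ->]].
  - rewrite even_2, div2_2, !bjoin_even. unfold ovl. destruct (Nat.ltb_spec a k); auto.
    simpl. rewrite cnth_code, nth_prefix; auto.
  - rewrite even_2S, !bjoin_odd. reflexivity.
Qed.

Lemma hard_total {X Y U V : rep} (h : problem (jump_rep X) Y) (g : problem U V) aH aK p0 k :
  computable_nat aH -> computable_nat aK ->
  weih_data h (totalization g) (assoc_fun aH) (assoc_fun aK) ->
  (forall p x t, delta (jump_rep X) p x -> dom h x -> (forall i, i < k -> p i = p0 i) ->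
     assoc_fun aK p t -> good_T g t) ->
  weihrauch h g.
Proof.
  intros caH caK W Hgood. set (cs := code (prefix p0 k)).
  exists (assoc_fun (aP (phib k cs 0) aH)), (assoc_fun (aP (phi0 k cs) aK)). split; [|split].
  - exists (aP (phib k cs 0) aH); split; [apply phib_comp; auto|reflexivity].
  - exists (aP (phi0 k cs) aK); split; [apply phi0_comp; auto|reflexivity].
  - intros G pG rG p x Hp Hd.
    set (ph := ovl p0 k p). assert (Hph : delta (jump_rep X) ph x) by (apply ovl_name; auto).
    destruct (red_get h (totalization g) aH aK (PR (totalization g)) ph x W (PR_pf _) (PR_real _) Hph Hd)
      as [t [s0 [r0 [y0 [Kt _]]]]].
    destruct (Hgood ph x t Hph Hd) as [u [Hu Hdu]]; auto.
    { intros i hi. unfold ph, ovl. replace (i <? k) with true by (symmetry; apply Nat.ltb_lt; auto). auto. }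
    destruct (rG t u Hu Hdu) as [s [v [Gs [Hs Hg]]]].
    assert (Ro : realizes (over (PR (totalization g)) t s) (totalization g)).
    { apply over_real. apply PR_real. intros x' Hx' _. pose proof (delta_fun U t x' u Hx' Hu). subst.
      exists v. split; auto. intros _; auto. }
    destruct (red_use h _ aH aK _ ph x t s W (over_pf _ _ _ (PR_pf _)) Ro Hph Hd Kt
                (or_introl (conj eq_refl eq_refl))) as [r [y [Hr [Hy Hh]]]].
    exists r, y. split; auto. exists t, s. split; [|split]; auto.
    + apply aP_spec. unfold cs. rewrite phi0_ovl. auto.
    + apply aP_spec. unfold cs. rewrite phib_bjoin.
      replace (fun j => s j + 0) with s by (extensionality j; lia). auto.
Qed.

Lemma hard_compl {X Y U V : rep} (h : problem (jump_rep X) Y) (g : problem U V) aH aK p0 k :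
  computable_nat aH -> computable_nat aK ->
  weih_data h (pcompletion g) (assoc_fun aH) (assoc_fun aK) ->
  (forall p x t, delta (jump_rep X) p x -> dom h x -> (forall i, i < k -> p i = p0 i) ->
     assoc_fun aK p t -> good_c g t) ->
  weihrauch h g.
Proof.
  intros caH caK W Hgood. set (cs := code (prefix p0 k)).
  exists (assoc_fun (aP (phib k cs 1) aH)), (assoc_fun (acomp (aP (phi0 k cs) aK) aM1)). split; [|split].
  - exists (aP (phib k cs 1) aH); split; [apply phib_comp; auto|reflexivity].
  - exists (acomp (aP (phi0 k cs) aK) aM1); split; [apply acomp_comp; [apply phi0_comp; auto|apply aM1_comp]|reflexivity].
  - intros G pG rG p x Hp Hd.
    set (ph := ovl p0 k p). assert (Hph : delta (jump_rep X) ph x) by (apply ovl_name; auto).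
    destruct (red_get h (pcompletion g) aH aK (PR (pcompletion g)) ph x W (PR_pf _) (PR_real _) Hph Hd)
      as [t [s0 [r0 [y0 [Kt _]]]]].
    destruct (Hgood ph x t Hph Hd) as [u [Hu Hdu]]; auto.
    { intros i hi. unfold ph, ovl. replace (i <? k) with true by (symmetry; apply Nat.ltb_lt; auto). auto. }
    destruct Hu as [w [Hw Hwu]].
    destruct (rG w u Hwu Hdu) as [s [v [Gs [Hs Hg]]]].
    assert (Ro : realizes (over (PR (pcompletion g)) t (fun i => S (s i))) (pcompletion g)).
    { apply over_real. apply PR_real. intros x' Hx' _.
      assert (Hu' : delta (completion U) t (Some u)) by (exists w; auto).
      pose proof (delta_fun (completion U) t x' (Some u) Hx' Hu'). subst.
      exists (Some v). split. exists s. split; auto. apply minus1_S.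
      intros u'' e _. inversion e; subst. exists v. auto. }
    destruct (red_use h _ aH aK _ ph x t (fun i => S (s i)) W (over_pf _ _ _ (PR_pf _)) Ro Hph Hd Kt
                (or_introl (conj eq_refl eq_refl))) as [r [y [Hr [Hy Hh]]]].
    exists r, y. split; auto. exists w, s. split; [|split]; auto.
    + apply acomp_spec with t. apply aP_spec. unfold cs. rewrite phi0_ovl. auto. apply aM1_spec; auto.
    + apply aP_spec. unfold cs. rewrite phib_bjoin.
      replace (fun j => s j + 1) with (fun j => S (s j)) by (extensionality j; lia). auto.
Qed.


Lemma mixp_agree p k q i : i < k -> mixp p k q i = p i.
Proof. intros h. unfold mixp. replace (i <? k) with true by (symmetry; apply Nat.ltb_lt; auto). auto. Qed.

Lemma sigma_nat {X U' V' : rep} (f : problem X Nat_rep) (g' : problem U' V') aH aK :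
  single_valued f -> nonconstant f -> weih_data (jump f) g' (assoc_fun aH) (assoc_fun aK) ->
  exists p0 k, forall p x t, delta (jump_rep X) p x -> dom f x -> (forall i, i < k -> p i = p0 i) ->
    assoc_fun aK p t -> ~ (forall s, (exists v, delta V' s v) -> realizes (over (PR g') t s) g').
Proof.
  intros sv [x1 [x2 [y1 [y2 [F1 [F2 Ne]]]]]] W.
  destruct (delta_surj X x1) as [q1 Hq1].
  set (p1 := mixp (fun _ => 0) 0 q1). assert (Hp1 : delta (jump_rep X) p1 x1) by (apply mixp_name; auto).
  destruct (red_get (jump f) g' aH aK (PR g') p1 x1 W (PR_pf _) (PR_real _) Hp1 (ex_intro _ y1 F1))
    as [t1 [s1 [r1 [z1 [K1 [G1 [H1 [D1 F1']]]]]]]].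
  simpl in D1. pose proof (sv _ _ _ F1 F1'). subst z1.
  destruct (H1 0) as [kn1 [A1 B1]].
  destruct (delta_surj X x2) as [q2 Hq2].
  set (p3 := mixp p1 kn1 q2). assert (Hp3 : delta (jump_rep X) p3 x2) by (apply mixp_name; auto).
  destruct (red_get (jump f) g' aH aK (PR g') p3 x2 W (PR_pf _) (PR_real _) Hp3 (ex_intro _ y2 F2))
    as [t3 [s3 [r3 [z3 [K3 [G3 [H3 [D3 F3']]]]]]]].
  simpl in D3. pose proof (sv _ _ _ F2 F3'). subst z3.
  destruct (H3 0) as [kn3 [A3 B3]].
  exists p3, (Nat.max kn1 kn3). intros p x t Hp Hd Hag Kt Bad.
  destruct (red_use (jump f) g' aH aK (over (PR g') t s1) p x t s1 W (over_pf _ _ _ (PR_pf _))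
              (Bad s1 (PR_name _ _ _ G1)) Hp Hd Kt (or_introl (conj eq_refl eq_refl))) as [r [y [Hr [Hy Hf]]]].
  destruct (red_use (jump f) g' aH aK (over (PR g') t s3) p x t s3 W (over_pf _ _ _ (PR_pf _))
              (Bad s3 (PR_name _ _ _ G3)) Hp Hd Kt (or_introl (conj eq_refl eq_refl))) as [r' [y' [Hr' [Hy' Hf']]]].
  simpl in Hy, Hy'.
  assert (E1 : r 0 = r1 0).
  { apply (assoc_local aH (bjoin p1 s1) (bjoin p s1) r1 r 0 kn1 Hr A1 B1).
    apply bjoin_agree; auto; intros i hi; rewrite Hag by lia; unfold p3; rewrite mixp_agree; auto. }
  assert (E3 : r' 0 = r3 0).
  { apply (assoc_local aH (bjoin p3 s3) (bjoin p s3) r3 r' 0 kn3 Hr' A3 B3).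
    apply bjoin_agree; auto; intros i hi; rewrite Hag by lia; auto. }
  pose proof (sv _ _ _ Hf Hf'). subst. apply Ne. congruence.
Qed.

Lemma sier_nz r b n : delta Sier_rep r b -> r n <> 0 -> b = true.
Proof. simpl. intros [h1 h2] hn. destruct b; auto; exfalso; apply hn; apply h1; auto. Qed.

Lemma sier_true r : delta Sier_rep r true -> exists n, r n <> 0.
Proof.
  simpl. intros [h1 h2]. apply NNPP. intros N. assert (true = false) by (apply h2; intros n; apply NNPP; intro c; apply N; eauto).
  discriminate.
Qed.

Lemma sier_false r n : delta Sier_rep r false -> r n = 0.
Proof. simpl. intros [h1 h2]. apply h1. auto. Qed.

Lemma sigma_sier {X U V : rep} (f : problem X Sier_rep) (g : problem U V) aH aK :
  single_valued f -> nonconstant f -> weih_data (jump f) (pcompletion g) (assoc_fun aH) (assoc_fun aK) ->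
  exists p0 k, forall p x t, delta (jump_rep X) p x -> dom f x -> (forall i, i < k -> p i = p0 i) ->
    assoc_fun aK p t -> good_c g t.
Proof.
  intros sv [x1 [x2 [y1 [y2 [F1 [F2 Ne]]]]]] W.
  assert (Hxs : exists xT xF, f xT true /\ f xF false).
  { destruct y1, y2; try congruence; eauto. }
  clear x1 x2 y1 y2 F1 F2 Ne. destruct Hxs as [xT [xF [FT FF]]].
  destruct (delta_surj X xT) as [qT HqT].
  set (pT := mixp (fun _ => 0) 0 qT). assert (HpT : delta (jump_rep X) pT xT) by (apply mixp_name; auto).
  destruct (red_get (jump f) _ aH aK (PR (pcompletion g)) pT xT W (PR_pf _) (PR_real _) HpT (ex_intro _ true FT))
    as [tT [sT [rT [zT [KT [GT [HT [DT FT']]]]]]]].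
  pose proof (sv _ _ _ FT FT'). subst zT.
  destruct (sier_true rT DT) as [n Hn].
  destruct (HT n) as [kn [An Bn]].
  exists pT, kn. intros p x t Hp Hd Hag Kt. apply NNPP. intros NG.
  destruct (red_use (jump f) _ aH aK (over (PR (pcompletion g)) t sT) p x t sT W (over_pf _ _ _ (PR_pf _))
              (bad_compl g t sT NG) Hp Hd Kt (or_introl (conj eq_refl eq_refl))) as [r [y [Hr [Hy Hf]]]].
  assert (Er : r n = rT n).
  { apply (assoc_local aH (bjoin pT sT) (bjoin p sT) rT r n kn Hr An Bn).
    apply bjoin_agree; auto; intros i hi; rewrite Hag; auto. }
  assert (y = true) by (apply (sier_nz r y n); auto; rewrite Er; auto). subst y.
  destruct (red_use (jump f) _ aH aK (over (PR (pcompletion g)) t (fun _ => 0)) p x t (fun _ => 0) W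
              (over_pf _ _ _ (PR_pf _)) (bad_compl g t _ NG) Hp Hd Kt (or_introl (conj eq_refl eq_refl)))
    as [r0 [y0 [Hr0 [Hy0 Hf0]]]].
  pose proof (sv _ _ _ Hf Hf0). subst y0.
  destruct (sier_true r0 Hy0) as [n0 Hn0].
  destruct (Hr0 n0) as [kn0 [An0 Bn0]].
  destruct (delta_surj X xF) as [qF HqF].
  set (p' := mixp p kn0 qF). assert (Hp' : delta (jump_rep X) p' xF) by (apply mixp_name; auto).
  destruct (red_get (jump f) _ aH aK (PR (pcompletion g)) p' xF W (PR_pf _) (PR_real _) Hp' (ex_intro _ false FF))
    as [t' [s0' [r0' [z0' [K' _]]]]].
  assert (Hs' : exists s', (forall i, i < kn0 -> s' i = 0) /\
                 realizes (over (PR (pcompletion g)) t' s') (pcompletion g)).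
  { destruct (classic (good_c g t')) as [[u' [Hu' [v' Hv']]]|NG'].
    - destruct (delta_surj V v') as [s'' Hs''].
      exists (pad kn0 s''). split.
      + intros i hi. unfold pad. replace (i <? kn0) with true by (symmetry; apply Nat.ltb_lt; auto). auto.
      + apply over_real. apply PR_real. intros x' Hx' _.
        pose proof (delta_fun (completion U) t' x' (Some u') Hx' Hu'). subst.
        exists (Some v'). split. exists s''. split; auto. apply minus1_pad.
        intros u'' e _. inversion e; subst. exists v'. auto.
    - exists (fun _ => 0). split; auto. apply bad_compl; auto. }
  destruct Hs' as [s' [Zs' Rs']].
  destruct (red_use (jump f) _ aH aK (over (PR (pcompletion g)) t' s') p' xF t' s' W
              (over_pf _ _ _ (PR_pf _)) Rs' Hp' (ex_intro _ false FF) K' (or_introl (conj eq_refl eq_refl)))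
    as [r' [y' [Hr' [Hy' Hf']]]].
  pose proof (sv _ _ _ FF Hf'). subst y'.
  assert (E0 : r' n0 = r0 n0).
  { apply (assoc_local aH (bjoin p (fun _ => 0)) (bjoin p' s') r0 r' n0 kn0 Hr' An0 Bn0).
    apply bjoin_agree. intros i hi. unfold p'. rewrite mixp_agree; auto. intros i hi. rewrite Zs'; auto. }
  apply Hn0. rewrite <- E0. apply (sier_false r' n0 Hy').
Qed.

Theorem proposition4p19 :
  (forall (X : rep) (f : problem X Nat_rep),
     single_valued f -> nonconstant f ->
     co_complete (jump f) /\ co_total (jump f)) /\
  (forall (X : rep) (fS : problem X Sier_rep),
     single_valued fS -> nonconstant fS ->
     co_complete (jump fS)).
Proof.
  split.
  - intros X f sv nc. split.
    + intros U V g. split.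
      * intros [H [K [[aH [caH EH]] [[aK [caK EK]] W]]]]. subst H K.
        destruct (sigma_nat f (pcompletion g) aH aK sv nc W) as [p0 [k Hs]].
        apply (hard_compl (jump f) g aH aK p0 k caH caK W).
        intros p x t Hp Hd Hag Kt. apply NNPP. intros NG.
        apply (Hs p x t Hp Hd Hag Kt). intros s _. apply bad_compl; auto.
      * apply easy_compl.
    + intros U V g. split.
      * intros [H [K [[aH [caH EH]] [[aK [caK EK]] W]]]]. subst H K.
        destruct (sigma_nat f (totalization g) aH aK sv nc W) as [p0 [k Hs]].
        apply (hard_total (jump f) g aH aK p0 k caH caK W).
        intros p x t Hp Hd Hag Kt. apply NNPP. intros NG.
        apply (Hs p x t Hp Hd Hag Kt). intros s Hs'. apply bad_total; auto.
      * apply easy_total.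
  - intros X f sv nc U V g. split.
    + intros [H [K [[aH [caH EH]] [[aK [caK EK]] W]]]]. subst H K.
      destruct (sigma_sier f g aH aK sv nc W) as [p0 [k Hs]].
      apply (hard_compl (jump f) g aH aK p0 k caH caK W). exact Hs.
    + apply easy_compl.
Qed.
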